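(* Let $n\ge1$, $I=\{1,\dots,n\}$, and let $x,\sigma_1,\dots,\sigma_n,\tau_1,\dots,\tau_n$ be independent indeterminates; write $\sigma=(\sigma_i)_{i\in I}$, $\tau=(\tau_i)_{i\in I}$. For $j\in I$ let $\beta_j(\sigma,\tau)$ be the multiset $\{\sigma_i-\sigma_j: i\in I\}\cup\{\tau_i+\sigma_j: i\in I\}$, let $\phi_j(x;\sigma,\tau)=\phi(x;\beta_j(\sigma,\tau))$, and $\Phi(x;\sigma,\tau)=\sum_{j\in I}\phi_j(x;\sigma,\tau)$. Then $\Phi(x;\sigma,\tau)=\Phi(x;\tau,\sigma)$, where $\Phi(x;\tau,\sigma)$ is obtained by interchanging the roles of $\sigma$ and $\tau$.
   Context: For a multiset $\beta$, $\phi(x;\beta)=\prod_{b\in\beta,\,b\neq0}\frac{b-x}{b}$ (product with multiplicity over the nonzero elements; here this omits exactly the elements $\sigma_j-\sigma_j=0$). *)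

(* Defs.v *)
From mathcomp Require Import all_boot all_order all_algebra.
Set Implicit Arguments. Unset Strict Implicit. Unset Printing Implicit Defensive.
Import GRing.Theory.
Local Open Scope ring_scope.

(* phi(x; beta) = prod over the nonzero elements b of the multiset beta
   (with multiplicity) of (b - x)/b.  Multisets are represented as seqs. *)
Definition phi (F : fieldType) (x : F) (beta : seq F) : F :=
  \prod_(b <- beta | b != 0) ((b - x) / b).

Definition beta_j (F : fieldType) (n : nat) (sigma tau : 'I_n -> F) (j : 'I_n)
  : seq F :=
  [seq sigma i - sigma j | i <- enum 'I_n] ++ [seq tau i + sigma j | i <- enum 'I_n].

Definition phi_j (F : fieldType) (n : nat) (x : F) (sigma tau : 'I_n -> F)
  (j : 'I_n) : F := phi x (beta_j sigma tau j).

Definition Phi (F : fieldType) (n : nat) (x : F) (sigma tau : 'I_n -> F) : F :=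
  \sum_(j < n) phi_j x sigma tau j.

(* Main.v *)
Require Import Defs.
From mathcomp Require Import all_boot all_order all_algebra.
From mathcomp Require Import ring.
Set Implicit Arguments. Unset Strict Implicit. Unset Printing Implicit Defensive.
Import GRing.Theory.
Local Open Scope ring_scope.

Lemma size_filter_neq (T : finType) (k : T) :
  size [seq l <- enum T | l != k] = #|T|.-1.
Proof.
rewrite -(cardC1 k) cardE /enum_mem -filter_predI; congr size.
by apply: eq_filter => x /=; rewrite !inE andbT.
Qed.

Section Lag.
Variable F : fieldType.

Lemma lagrange (T : finType) (c : T -> F) (R : {poly F}) :
  injective c -> (size R <= #|T|)%N ->
  R`_(#|T|.-1) = \sum_k R.[c k] / \prod_(l <- enum T | l != k) (c k - c l).
Proof.
move=> inj szR.
pose d k := \prod_(l <- enum T | l != k) (c k - c l).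
pose B k := \prod_(l <- enum T | l != k) ('X - (c l)%:P).
have dn0 k : d k != 0.
  rewrite /d prodf_seq_neq0; apply/allP => l _; apply/implyP => hl.
  by rewrite subr_eq0; apply: contra hl => /eqP /inj ->.
have szB k : size (B k) = #|T|.
  rewrite /B -big_filter size_prod_XsubC size_filter_neq.
  by apply: prednK; apply/card_gt0P; exists k.
have hB k j : (B k).[c j] = if j == k then d k else 0.
  rewrite /B horner_prod; under eq_bigr do rewrite hornerXsubC.
  case: eqP => [-> //|/eqP hjk].
  rewrite big_enum_cond /= (bigD1 j) /=; last by [].
  by rewrite subrr mul0r.
pose L := \sum_k (R.[c k] / d k) *: B k.
have LR : L = R.
  apply/eqP; rewrite -subr_eq0; apply/eqP.
  apply: (@roots_geq_poly_eq0 _ _ (map c (enum T))).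
  - apply/allP => y /mapP [j _ ->]; rewrite /root /L hornerD hornerN horner_sum.
    under eq_bigr do rewrite hornerZ hB.
    rewrite (bigD1 j) //= eqxx big1 => [|i hi]; last by rewrite eq_sym (negbTE hi) mulr0.
    by rewrite addr0 divfK // subrr.
  - by rewrite map_inj_uniq ?enum_uniq.
  - rewrite size_map -cardE.
    apply: leq_trans (size_polyD _ _) _; rewrite size_polyN geq_max szR andbT.
    apply: leq_trans (size_sum _ _ _) _.
    apply/bigmax_leqP => k _; apply: leq_trans (size_scale_leq _ _) _.
    by rewrite szB.
have -> : R`_(#|T|.-1) = L`_(#|T|.-1) by rewrite LR.
rewrite /L coef_sum; apply: eq_bigr => k _.
rewrite coefZ -(szB k) -lead_coefE.
by rewrite /B lead_coef_prod_XsubC mulr1.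
Qed.
End Lag.
Section Key.
Variable F : fieldType.

Lemma coefPn_fin (T : finType) (a : T -> F) : (0 < #|T|)%N ->
  (\prod_(l <- enum T) ('X - (a l)%:P))`_(#|T|.-1) = - \sum_(l <- enum T) a l.
Proof.
move=> hT; rewrite -(big_map a predT (fun p => 'X - p%:P)).
have -> : #|T| = size (map a (enum T)) by rewrite size_map cardE.
rewrite coefPn_prod_XsubC ?big_map //.
by rewrite size_map -cardE -lt0n.
Qed.

Lemma size_prod_fin (T : finType) (a : T -> F) :
  size (\prod_(l <- enum T) ('X - (a l)%:P)) = #|T|.+1.
Proof. by rewrite size_prod_XsubC cardE. Qed.

Lemma key (T : finType) (c a : T -> F) : injective c -> (0 < #|T|)%N ->
  \sum_k c k = \sum_k a k ->
  \sum_k (\prod_(l <- enum T) (c k - a l)) / \prod_(l <- enum T | l != k) (c k - c l) = 0.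
Proof.
move=> inj hT hsum.
pose P := \prod_(l <- enum T) ('X - (a l)%:P).
pose Q := \prod_(l <- enum T) ('X - (c l)%:P).
have szR : (size (P - Q)%R <= #|T|)%N.
  apply/leq_sizeP => j hj; rewrite coefB.
  move: hj; rewrite leq_eqVlt => /orP [/eqP <-|hj].
    have := size_prod_fin a; have := size_prod_fin c.
    rewrite -/P -/Q => hQ hP.
    have -> : #|T| = (size P).-1 by rewrite hP.
    rewrite -lead_coefE hP -hQ -lead_coefE /P /Q !lead_coef_prod_XsubC.
    by rewrite subrr.
  by rewrite !nth_default ?subrr // size_prod_fin.
have := lagrange inj szR.
have e f : \sum_(l <- enum T) f l = \sum_l (f l : F) by rewrite big_enum.
rewrite coefB /P /Q !coefPn_fin // !e hsum subrr => /esym H.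
rewrite -[RHS]H; apply: eq_bigr => k _; congr (_ / _).
rewrite hornerD hornerN !horner_prod; apply/esym.
rewrite [X in _ - X](bigD1_seq k) ?mem_enum ?enum_uniq //= hornerXsubC subrr mul0r subr0.
by apply: eq_bigr => l _; rewrite hornerXsubC.
Qed.
Lemma divNN' (a b : F) : (-a)/(-b) = a/b.
Proof. by rewrite invrN mulrNN. Qed.

Lemma nodeL n x (s t : 'I_n -> F) j
  (hs : forall i j : 'I_n, i != j -> s i != s j)
  (hst : forall i j : 'I_n, t i + s j != 0) :
  (\prod_i (s j - (s i - x)) * \prod_i (s j - (- t i + x))) /
  (\prod_(i | i != j) (s j - s i) * \prod_i (s j - - t i)) = x * phi_j x s t j.
Proof.
have e (P : pred 'I_n) (f : 'I_n -> F) :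
  \prod_(i <- enum 'I_n | P i) f i = \prod_(i | P i) f i.
  by rewrite big_enum_cond.
rewrite /phi_j /phi /beta_j big_cat !big_map -!enumT !e /=.
have h1 : \prod_(i | s i - s j != 0) ((s i - s j - x) / (s i - s j)) =
    \prod_(i | i != j) ((s j - (s i - x)) / (s j - s i)).
  apply: eq_big => i.
    case: (eqVneq i j) => [->|hij]; first by rewrite subrr eqxx.
    by rewrite subr_eq0 hs.
  move=> _; rewrite -divNN'; congr (_ / _); ring.
have h2 : \prod_(i | t i + s j != 0) ((t i + s j - x) / (t i + s j)) =
    \prod_i ((s j - (- t i + x)) / (s j - - t i)).
  apply: eq_big => i; first by rewrite hst.
  by move=> _; congr (_ / _); ring.
rewrite h1 h2 !prodf_div (bigD1 j (P := xpredT)) //=.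
have -> : s j - (s j - x) = x by ring.
by rewrite mulf_div !mulrA.
Qed.

Lemma nodeR n x (s t : 'I_n -> F) j
  (ht : forall i j : 'I_n, i != j -> t i != t j)
  (hst : forall i j : 'I_n, t i + s j != 0) :
  (\prod_i (- t j - (s i - x)) * \prod_i (- t j - (- t i + x))) /
  (\prod_i (- t j - s i) * \prod_(i | i != j) (- t j - - t i)) = - x * phi_j x t s j.
Proof.
have e (P : pred 'I_n) (f : 'I_n -> F) :
  \prod_(i <- enum 'I_n | P i) f i = \prod_(i | P i) f i.
  by rewrite big_enum_cond.
rewrite /phi_j /phi /beta_j big_cat !big_map -!enumT !e /=.
have h1 : \prod_(i | t i - t j != 0) ((t i - t j - x) / (t i - t j)) =
    \prod_(i | i != j) ((- t j - (- t i + x)) / (- t j - - t i)).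
  apply: eq_big => i.
    case: (eqVneq i j) => [->|hij]; first by rewrite subrr eqxx.
    by rewrite subr_eq0 ht.
  by move=> _; congr (_ / _); ring.
have h2 : \prod_(i | s i + t j != 0) ((s i + t j - x) / (s i + t j)) =
    \prod_i ((- t j - (s i - x)) / (- t j - s i)).
  apply: eq_big => i; first by rewrite addrC hst.
  move=> _; rewrite -divNN'; congr (_ / _); ring.
rewrite h1 h2 !prodf_div (bigD1 j (P := xpredT) (F := fun i => - t j - (- t i + x))) //=.
have -> : - t j - (- t j + x) = - x by ring.
have gen (a b c d y : F) : a * (y * b) / (c * d) = y * (b / d * (a / c)).
  by rewrite mulf_div (mulrC c d); ring.
exact: gen.
Qed.
End Key.
Theorem lemma4p3 (F : fieldType) (n : nat) (hn : (0 < n)%N)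
  (x : F) (sigma tau : 'I_n -> F)
  (hs : forall i j : 'I_n, i != j -> sigma i != sigma j)
  (ht : forall i j : 'I_n, i != j -> tau i != tau j)
  (hst : forall i j : 'I_n, tau i + sigma j != 0) :
  Phi x sigma tau = Phi x tau sigma.
Proof.
have [->|x0] := eqVneq x 0.
  have p0 s t j : phi_j 0 s t j = 1 :> F.
    by rewrite /phi_j /phi big1 // => b hb; rewrite subr0 divff.
  by rewrite /Phi; apply: eq_bigr => j _; rewrite !p0.
pose c (k : ('I_n + 'I_n)%type) := match k with inl i => sigma i | inr i => - tau i end.
pose a (k : ('I_n + 'I_n)%type) := match k with inl i => sigma i - x | inr i => - tau i + x end.
have inj : injective c.
  case=> [i|i] [j|j] /= h.
  - by case: (eqVneq i j) => [->//|/hs]; rewrite h eqxx.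
  - by move: (hst j i); rewrite h addrN eqxx.
  - by move: (hst i j); rewrite -h addrN eqxx.
  - case: (eqVneq i j) => [->//|/ht]; by move/oppr_inj: h => ->; rewrite eqxx.
have hT : (0 < #|{: 'I_n + 'I_n}|)%N by rewrite card_sum card_ord addn_gt0 hn.
have hsum : \sum_k c k = \sum_k a k.
  rewrite !big_sumType /= !big_split /= !sumrN; ring.
have := key inj hT hsum.
have e1 (f : 'I_n + 'I_n -> F) : \prod_(l <- enum {: 'I_n + 'I_n}) f l =
    \prod_(l : 'I_n) f (inl l) * \prod_(l : 'I_n) f (inr l).
  by rewrite big_enum big_sumType.
have e2 k (f : 'I_n + 'I_n -> F) : \prod_(l <- enum {: 'I_n + 'I_n} | l != k) f l =
    \prod_(l : 'I_n | inl l != k) f (inl l) * \prod_(l : 'I_n | inr l != k) f (inr l).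
  by rewrite big_enum_cond big_sumType.
have el i (f : 'I_n + 'I_n -> F) : \prod_(l <- enum {: 'I_n + 'I_n} | l != inl i) f l =
    \prod_(l : 'I_n | l != i) f (inl l) * \prod_(l : 'I_n) f (inr l).
  by rewrite e2; congr (_ * _); apply: eq_bigl => l.
have er i (f : 'I_n + 'I_n -> F) : \prod_(l <- enum {: 'I_n + 'I_n} | l != inr i) f l =
    \prod_(l : 'I_n) f (inl l) * \prod_(l : 'I_n | l != i) f (inr l).
  by rewrite e2; congr (_ * _); apply: eq_bigl => l.
rewrite big_sumType /=.
under eq_bigr => i _ do rewrite e1 el /= nodeL //.
under [X in _ + X]eq_bigr => i _ do rewrite e1 er /= nodeR //.
rewrite -!mulr_sumr mulNr => /eqP; rewrite subr_eq0 => /eqP /(mulfI x0).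
by rewrite /Phi.
Qed.
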